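(* Consider the Basilica replacement rule. Let $n\in\mathbb{N}$ and let $O_n$ be the graph with $n+3$ vertices and $2n+4$ edges described below. Then the sublevel complex $K(O_n)_{2n+3}$ is empty; equivalently, for every rearrangement $X(O_n)\to X(G)$ the graph $G$ has at least $2n+4$ edges (so every graph obtained from $O_n$ by a finite sequence of simple expansions and contractions has at least $2n+4$ edges).
   Context: Basilica replacement rule $e\to R$: $e$ is an edge $v\to w$; $R$ has vertices $v,w,4$ and edges $1\colon v\to4$, a loop $2$ at $4$, $3\colon 4\to w$. A simple expansion $G\lhd\varepsilon$ of a finite directed graph $G$ at an edge $\varepsilon$ (loops allowed) deletes $\varepsilon$ and inserts a new vertex $\varepsilon4$ with edges $\varepsilon1$ from the initial vertex of $\varepsilon$ to $\varepsilon4$, a loop $\varepsilon2$ at $\varepsilon4$, and $\varepsilon3$ from $\varepsilon4$ to the terminal vertex of $\varepsilon$; a simple contraction is the reverse. The graph $O_n$: vertices $u_0,\dots,u_n,p,l$; for each $0\le i<n$ two edges $u_i\to u_{i+1}$ and $u_{i+1}\to u_i$; an edge $v\colon u_0\to p$ and a loop $w$ at $p$; an edge $a\colon u_n\to l$ and a loop $b$ at $l$. For a base graph $G$, $K(G)$ denotes the rearrangement cube complex: its $0$-cubes are range equivalence classes $[f]$ of rearrangements $f\colon X(G)\to X(G')$ (homeomorphisms of limit spaces given piecewise on cells by canonical prefix-replacement maps, equivalently represented by a graph isomorphism between an expansion of $G$ and an expansion of $G'$), with cubes spanned by $\{[\Delta_T\circ f]: T\subseteq S\}$ for $S\subseteq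 E(G')$, $\Delta_T$ denoting expansion of the edges in $T$. The rank of $[f]$ is $|E(G')|$, extended affinely over cubes, and $K(G)_m$ is the subcomplex spanned by $0$-cubes of rank $\le m$. *)

(* Defs.v *)
From mathcomp Require Import all_boot.
Set Implicit Arguments. Unset Strict Implicit. Unset Printing Implicit Defensive.

(* A finite directed multigraph (loops and parallel edges allowed):
   vertices are 0, ..., gnv - 1; the edges are the entries of the list
   gedges, each entry (s, t) being an edge from s to t (the position in the
   list names the edge). *)
Record graph := Graph { gnv : nat; gedges : seq (nat * nat) }.

Definition wf_graph (G : graph) : bool :=
  all (fun e => (e.1 < gnv G) && (e.2 < gnv G)) (gedges G).

(* Simple expansion at the i-th edge eps = (v, w) (Basilica rule):
   delete eps, add a new vertex x := gnv G (= eps4) with edges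
   eps1 : v -> x, eps2 : x -> x (loop), eps3 : x -> w. *)
Definition expand (G : graph) (i : nat) : graph :=
  let e := nth (0, 0) (gedges G) i in
  let x := gnv G in
  Graph (gnv G).+1
        (take i (gedges G) ++ drop i.+1 (gedges G)
              ++ [:: (e.1, x); (x, x); (x, e.2)]).

Inductive expansion : graph -> graph -> Prop :=
| expansion_refl G : expansion G G
| expansion_step G i H :
    i < size (gedges G) -> expansion (expand G i) H -> expansion G H.

Definition graph_iso (G H : graph) : Prop :=
  gnv G = gnv H /\
  exists f : nat -> nat,
    {in [pred v | v < gnv G] &, injective f} /\
    (forall v, v < gnv G -> f v < gnv H) /\
    perm_eq [seq (f e.1, f e.2) | e <- gedges G] (gedges H).

(* There is a rearrangement X(G) -> X(G'): some expansion of G is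
   isomorphic to some expansion of G'. *)
Definition rearrangement_exists (G G' : graph) : Prop :=
  exists E1 E2, expansion G E1 /\ expansion G' E2 /\ graph_iso E1 E2.

(* The graph O_n: u_i = i (0 <= i <= n), p = n+1, l = n+2. *)
Definition O_graph (n : nat) : graph :=
  Graph n.+3
    (flatten [seq [:: (i, i.+1); (i.+1, i)] | i <- iota 0 n]
       ++ [:: (0, n.+1); (n.+1, n.+1); (n, n.+2); (n.+2, n.+2)]).

(* Main.v *)
Require Import Defs.
From mathcomp Require Import all_boot zify.
Set Implicit Arguments. Unset Strict Implicit.

Definition outdeg (E : seq (nat*nat)) v := count (fun z : nat*nat => z.1 == v) E.
Definition indeg (E : seq (nat*nat)) v := count (fun z : nat*nat => z.2 == v) E.
Definition t12 E v := (indeg E v == 1) && (outdeg E v == 2).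
Definition t22 E v := (indeg E v == 2) && (outdeg E v == 2).

Inductive conn (E : seq (nat*nat)) (ok : nat -> bool) : nat -> nat -> Prop :=
| cnil u : conn E ok u u
| ccons u v w : ok u -> ok v -> ((u,v) \in E) || ((v,u) \in E) ->
    conn E ok v w -> conn E ok u w.

Definition Pv E v := ~~ t22 E v \/ exists a b, t12 E a /\ t12 E b /\
   ~ conn E (fun z => z != v) a b.
Definition Qg E := forall a b z, t12 E a -> t12 E b -> z \in E ->
   conn (rem z E) xpredT a b.

Lemma conn_trans E (ok : nat -> bool) a b c : conn E ok a b -> conn E ok b c -> conn E ok a c.
Proof. elim=> // u v w ou ov h _ IH /IH; exact: ccons. Qed.

Lemma conn1 E (ok : nat -> bool) u v : ok u -> ok v -> (u,v) \in E -> conn E ok u v.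
Proof. move=> ou ov h; apply: ccons ou ov _ (cnil _ _ _); by rewrite h. Qed.

Lemma conn_sym E (ok : nat -> bool) a b : conn E ok a b -> conn E ok b a.
Proof.
elim=> [u|u v w ou ov h _ IH]; first exact: cnil.
apply: conn_trans IH _; apply: ccons ov ou _ (cnil _ _ _); by rewrite orbC.
Qed.

Lemma conn_map (h : nat -> nat) E (ok : nat -> bool) E' (ok' : nat -> bool) a b :
  (forall u v, ok u -> ok v -> (u,v) \in E -> conn E' ok' (h u) (h v)) ->
  conn E ok a b -> conn E' ok' (h a) (h b).
Proof.
move=> H; elim=> [u|u v w ou ov e _ IH]; first exact: cnil.
apply: conn_trans IH; case/orP: e => e; first exact: H.
apply: conn_sym; exact: H.
Qed.

Lemma conn_id E (ok : nat -> bool) E' (ok' : nat -> bool) a b :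
  (forall u v, ok u -> ok v -> (u,v) \in E -> conn E' ok' u v) ->
  conn E ok a b -> conn E' ok' a b.
Proof. move=> H; exact: (@conn_map id E ok E' ok'). Qed.

Lemma in_rem (T : eqType) (w z : T) s :
  (w \in rem z s) = (w \in s) && ((z != w) || (1 < count_mem w s)).
Proof.
rewrite -!has_pred1 !has_count count_mem_rem.
case: eqP => [<-|_] /=.
  by case: (count_mem z s) => [|[|k]].
by rewrite subn0 andbT.
Qed.

Lemma t12_lt G v : wf_graph G -> t12 (gedges G) v -> v < gnv G.
Proof.
rewrite /t12 /outdeg => /allP wf /andP[_ /eqP h].
have : has (fun z : nat*nat => z.1 == v) (gedges G) by rewrite has_count h.
by case/hasP => z /wf /andP[h1 _] /eqP <-.
Qed.

Definition R G i := take i (gedges G) ++ drop i.+1 (gedges G).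
Definition ed G i := nth (0,0) (gedges G) i.

Lemma edgesE G i : gedges (expand G i) =
  R G i ++ [:: ((ed G i).1, gnv G); (gnv G, gnv G); (gnv G, (ed G i).2)].
Proof. by rewrite /expand /= /R catA. Qed.

Lemma permER G i : i < size (gedges G) -> perm_eq (gedges G) (ed G i :: R G i).
Proof.
move=> hi; rewrite -{1}(cat_take_drop i (gedges G)) (drop_nth (0,0) hi) /R /ed.
by rewrite -cat1s perm_catCA.
Qed.

Lemma memER G i z : i < size (gedges G) ->
  (z \in gedges G) = (z == ed G i) || (z \in R G i).
Proof. by move=> hi; rewrite (perm_mem (permER hi)) inE. Qed.

Lemma countER G i p : i < size (gedges G) ->
  count p (gedges G) = p (ed G i) + count p (R G i).
Proof. by move=> hi; rewrite (permP (permER hi)). Qed.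

Lemma wfE G z : wf_graph G -> z \in gedges G -> (z.1 < gnv G) && (z.2 < gnv G).
Proof. by move/allP => h /h. Qed.

Lemma edin G i : i < size (gedges G) -> ed G i \in gedges G.
Proof. by move=> hi; rewrite /ed mem_nth. Qed.

Lemma Rin G i z : i < size (gedges G) -> z \in R G i -> z \in gedges G.
Proof. by move=> hi h; rewrite (memER _ hi) h orbT. Qed.

Lemma wfR G i z : wf_graph G -> i < size (gedges G) -> z \in R G i ->
  (z.1 < gnv G) && (z.2 < gnv G).
Proof. by move=> wf hi /(Rin hi) /(wfE wf). Qed.

Lemma wf_exp G i : wf_graph G -> i < size (gedges G) -> wf_graph (expand G i).
Proof.
move=> wf hi; apply/allP => z; rewrite edgesE /= mem_cat !inE.
have /andP[h1 h2] := wfE wf (edin hi).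
case/orP => [/(wfR wf hi) /andP[a b]|]; first by apply/andP; split; apply: ltnW.
by case/or3P => /eqP -> /=; apply/andP; split => //; apply: ltnW.
Qed.

Lemma count0R G i (p : pred (nat*nat)) : wf_graph G -> i < size (gedges G) ->
  (forall z, (z.1 < gnv G) && (z.2 < gnv G) -> ~~ p z) -> count p (R G i) = 0.
Proof.
move=> wf hi H; apply/eqP; rewrite -leqn0 leqNgt -has_count; apply/hasPn => z /(wfR wf hi).
exact: H.
Qed.

Lemma outdeg_old G i v : wf_graph G -> i < size (gedges G) -> v != gnv G ->
  outdeg (gedges (expand G i)) v = outdeg (gedges G) v.
Proof.
move=> wf hi nv; rewrite /outdeg edgesE count_cat (countER _ hi) /=.
have nv' : (gnv G == v) = false by rewrite eq_sym (negbTE nv).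
by rewrite nv' !addn0 addnC.
Qed.

Lemma indeg_old G i v : wf_graph G -> i < size (gedges G) -> v != gnv G ->
  indeg (gedges (expand G i)) v = indeg (gedges G) v.
Proof.
move=> wf hi nv; rewrite /indeg edgesE count_cat (countER _ hi) /=.
have nv' : (gnv G == v) = false by rewrite eq_sym (negbTE nv).
by rewrite nv' !addn0 addnC.
Qed.

Lemma t22_new G i : wf_graph G -> i < size (gedges G) ->
  t22 (gedges (expand G i)) (gnv G).
Proof.
move=> wf hi; have /andP[h1 h2] := wfE wf (edin hi).
rewrite /t22 /indeg /outdeg edgesE !count_cat /= !eqxx.
have c1 : count (fun z : nat*nat => z.2 == gnv G) (R G i) = 0.
  by apply: count0R => // z /andP[_ b] /=; rewrite neq_ltn b.
have c2 : count (fun z : nat*nat => z.1 == gnv G) (R G i) = 0.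
  by apply: count0R => // z /andP[b _] /=; rewrite neq_ltn b.
rewrite /R !count_cat in c1 c2; rewrite c1 c2 /=.
by rewrite (ltn_eqF h1) (ltn_eqF h2).
Qed.

Lemma t12_old G i v : wf_graph G -> i < size (gedges G) -> v != gnv G ->
  t12 (gedges (expand G i)) v = t12 (gedges G) v.
Proof. by move=> wf hi nv; rewrite /t12 outdeg_old ?indeg_old. Qed.
Lemma t22_old G i v : wf_graph G -> i < size (gedges G) -> v != gnv G ->
  t22 (gedges (expand G i)) v = t22 (gedges G) v.
Proof. by move=> wf hi nv; rewrite /t22 outdeg_old ?indeg_old. Qed.

Lemma t12_ne_new G i v : wf_graph G -> i < size (gedges G) ->
  t12 (gedges (expand G i)) v -> v != gnv G.
Proof.
move=> wf hi h; apply/eqP => e; move: h (t22_new wf hi); rewrite e /t12 /t22.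
by case/andP => /eqP -> _.
Qed.

Lemma inE'R G i z : z \in R G i -> z \in gedges (expand G i).
Proof. by move=> h; rewrite edgesE mem_cat h. Qed.
Lemma inE'1 G i : ((ed G i).1, gnv G) \in gedges (expand G i).
Proof. by rewrite edgesE mem_cat !inE eqxx /= orbT. Qed.
Lemma inE'2 G i : (gnv G, gnv G) \in gedges (expand G i).
Proof. by rewrite edgesE mem_cat !inE eqxx /= !orbT. Qed.
Lemma inE'3 G i : (gnv G, (ed G i).2) \in gedges (expand G i).
Proof. by rewrite edgesE mem_cat !inE eqxx /= !orbT. Qed.

Lemma memE' G i z : z \in gedges (expand G i) ->
  [\/ z \in R G i, z = ((ed G i).1, gnv G), z = (gnv G, gnv G) | z = (gnv G, (ed G i).2)].
Proof.
rewrite edgesE mem_cat !inE; case/orP; first by move=> h; apply: Or41.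
by case/or3P => /eqP ->; [apply: Or42 | apply: Or43 | apply: Or44].
Qed.

Lemma exp_conn_fwd G i y a b : wf_graph G -> i < size (gedges G) -> y != gnv G ->
  conn (gedges G) (fun z => z != y) a b ->
  conn (gedges (expand G i)) (fun z => z != y) a b.
Proof.
move=> wf hi ny; apply: conn_id => u v ou ov; rewrite (memER _ hi).
case/orP => [/eqP he|hR]; last by apply: conn1 => //; apply: inE'R.
have [-> ->] : u = (ed G i).1 /\ v = (ed G i).2 by rewrite -he.
have nx : gnv G != y by rewrite eq_sym.
apply: (ccons (v := gnv G)); rewrite ?inE'1 //; first by rewrite -he.
by apply: conn1; rewrite ?inE'3 // -he.
Qed.

Lemma exp_conn_bwd G i y a b : wf_graph G -> i < size (gedges G) ->
  a != gnv G -> b != gnv G ->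
  conn (gedges (expand G i)) (fun z => z != y) a b ->
  conn (gedges G) (fun z => z != y) a b.
Proof.
move=> wf hi na nb.
pose h z := if z == gnv G then (if (ed G i).1 == y then (ed G i).2 else (ed G i).1) else z.
have ha : h a = a by rewrite /h (negbTE na).
have hb : h b = b by rewrite /h (negbTE nb).
move=> c; rewrite -ha -hb; apply: (@conn_map h _ _ _ _ _ _ _ c) => u v ou ov.
have /andP[e1 e2] := wfE wf (edin hi).
case/memE' => [hR|[eu ev]|[eu ev]|[eu ev]]; try subst u v.
- have /andP[u1 v1] := wfR wf hi hR.
  rewrite /h (ltn_eqF u1) (ltn_eqF v1); apply: conn1 => //; exact: Rin hR.
- by rewrite /h (ltn_eqF e1) eqxx (negbTE ou); apply: cnil.
- by apply: cnil.
- rewrite /h eqxx (ltn_eqF e2); case: ifP => hy; first exact: cnil.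
  apply: conn1 => //; last by rewrite -surjective_pairing edin.
  by rewrite hy.
Qed.

Lemma neqR1 G i w p : wf_graph G -> i < size (gedges G) -> w \in R G i ->
  (p, gnv G) != w.
Proof.
move=> wf hi /(wfR wf hi) /andP[_ h]; apply/eqP => e; move: h; rewrite -e /=.
by rewrite ltnn.
Qed.
Lemma neqR2 G i w p : wf_graph G -> i < size (gedges G) -> w \in R G i ->
  (gnv G, p) != w.
Proof.
move=> wf hi /(wfR wf hi) /andP[h _]; apply/eqP => e; move: h; rewrite -e /=.
by rewrite ltnn.
Qed.

Lemma cntE'R G i w : wf_graph G -> i < size (gedges G) -> w \in R G i ->
  count_mem w (gedges (expand G i)) = count_mem w (R G i).
Proof.
move=> wf hi hw; rewrite edgesE count_cat /=.
by rewrite (negbTE (@neqR1 G i w (ed G i).1 wf hi hw)) (negbTE (@neqR2 G i w (gnv G) wf hi hw))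
  (negbTE (@neqR2 G i w (ed G i).2 wf hi hw)) !addn0.
Qed.

Lemma remedR G i w : i < size (gedges G) -> w \in rem (ed G i) (gedges G) -> w \in R G i.
Proof.
move=> hi; rewrite in_rem (memER _ hi) (countER _ hi); case/andP.
case/orP => [/eqP ->|//] /=; rewrite eqxx /=.
by rewrite -has_pred1 has_count; case: (count _ _) => [|[|]].
Qed.

Lemma P_old_fwd G i v : wf_graph G -> i < size (gedges G) -> v != gnv G ->
  Pv (gedges G) v -> Pv (gedges (expand G i)) v.
Proof.
move=> wf hi nv [nt|[a [b [ta [tb nc]]]]]; first by left; rewrite t22_old.
have na : a != gnv G by rewrite neq_ltn (t12_lt wf ta).
have nb : b != gnv G by rewrite neq_ltn (t12_lt wf tb).
right; exists a, b; rewrite !t12_old //; do 2!split => //.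
by move=> c; apply: nc; apply: exp_conn_bwd c.
Qed.

Lemma P_old_bwd G i v : wf_graph G -> i < size (gedges G) -> v != gnv G ->
  Pv (gedges (expand G i)) v -> Pv (gedges G) v.
Proof.
move=> wf hi nv [nt|[a [b [ta [tb nc]]]]]; first by left; rewrite -(t22_old wf hi nv).
have na := t12_ne_new wf hi ta; have nb := t12_ne_new wf hi tb.
right; exists a, b; rewrite -!(t12_old wf hi) //; do 2!split => //.
by move=> c; apply: nc; apply: exp_conn_fwd c.
Qed.

Lemma P_new G i : wf_graph G -> i < size (gedges G) -> Qg (gedges G) ->
  ~ Pv (gedges (expand G i)) (gnv G).
Proof.
move=> wf hi Q [nt|[a [b [ta [tb nc]]]]]; first by rewrite t22_new in nt.
have na := t12_ne_new wf hi ta; have nb := t12_ne_new wf hi tb.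
rewrite t12_old // in ta; rewrite t12_old // in tb.
apply: nc; have := Q a b _ ta tb (edin hi); apply: conn_id => u v _ _ /(remedR hi) h.
have /andP[u1 v1] := wfR wf hi h.
by apply: conn1; rewrite ?neq_ltn ?u1 ?v1 // inE'R.
Qed.

Lemma cnt_pos (T : eqType) (w : T) s : (w \in s) = (0 < count_mem w s).
Proof. by rewrite -has_pred1 has_count. Qed.

Lemma Q_fwd G i : wf_graph G -> i < size (gedges G) -> Qg (gedges G) ->
  Qg (gedges (expand G i)).
Proof.
move=> wf hi Q a b z ta tb hz.
have na := t12_ne_new wf hi ta; have nb := t12_ne_new wf hi tb.
rewrite t12_old // in ta; rewrite t12_old // in tb.
case/memE': hz => [hR|ez|ez|ez].
- have := Q a b z ta tb (Rin hi hR); apply: conn_id => u v _ _ hw.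
  have /andP[e1 e2] := wfE wf (edin hi).
  case: ((u, v) =P ed G i) => [he|hne].
    have [-> ->] : u = (ed G i).1 /\ v = (ed G i).2 by rewrite -he.
    apply: (ccons (v := gnv G)) => //.
      by apply/orP; left; apply: rem_mem; [exact: (neqR1 _ wf hi hR)| exact: inE'1].
    by apply: conn1 => //; apply: rem_mem; [exact: (neqR2 _ wf hi hR)| exact: inE'3].
  move: hw; rewrite in_rem (memER _ hi) => /andP[/orP[/eqP //|wR] c].
  apply: conn1 => //; rewrite in_rem inE'R //=; case/orP: c => [->//|c].
  apply/orP; right; apply: leq_trans c _.
  rewrite (countER _ hi) (cntE'R wf hi wR) /=.
  by move/eqP/negbTE: hne; rewrite eq_sym => ->.
all: have := Q a b _ ta tb (edin hi); apply: conn_id => u v _ _ /(remedR hi) h.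
all: apply: conn1 => //; rewrite rem_mem ?inE'R // ez eq_sym.
all: by [exact: (neqR1 _ wf hi h) | exact: (neqR2 _ wf hi h)].
Qed.

Lemma cnt_new3 G i : wf_graph G -> i < size (gedges G) ->
  count_mem (gnv G, (ed G i).2) (gedges (expand G i)) = 1.
Proof.
move=> wf hi; have /andP[e1 e2] := wfE wf (edin hi).
rewrite edgesE count_cat /= eqxx.
have -> : count_mem (gnv G, (ed G i).2) (R G i) = 0.
  apply/eqP; rewrite -leqn0 leqNgt -cnt_pos; apply/negP => h.
  by move: (neqR2 (ed G i).2 wf hi h); rewrite eqxx.
rewrite xpair_eqE (ltn_eqF e1) xpair_eqE eqxx /= eq_sym (ltn_eqF e2).
by [].
Qed.

Lemma Q_bwd G i : wf_graph G -> i < size (gedges G) -> Qg (gedges (expand G i)) ->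
  Qg (gedges G).
Proof.
move=> wf hi Q a b z ta tb hz.
have /andP[e1 e2] := wfE wf (edin hi).
have na : a != gnv G by rewrite neq_ltn (t12_lt wf ta).
have nb : b != gnv G by rewrite neq_ltn (t12_lt wf tb).
rewrite -(t12_old wf hi) // in ta; rewrite -(t12_old wf hi) // in tb.
pose h x := if x == gnv G then (ed G i).1 else x.
have ha : h a = a by rewrite /h (negbTE na).
have hb : h b = b by rewrite /h (negbTE nb).
have hx : h (gnv G) = (ed G i).1 by rewrite /h eqxx.
have h1 : h (ed G i).1 = (ed G i).1 by rewrite /h (ltn_eqF e1).
have h2 : h (ed G i).2 = (ed G i).2 by rewrite /h (ltn_eqF e2).
have hR : forall w, w \in R G i -> h w.1 = w.1 /\ h w.2 = w.2.
  move=> w /(wfR wf hi) /andP[w1 w2]; by rewrite /h (ltn_eqF w1) (ltn_eqF w2).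
rewrite -ha -hb; case: (z =P ed G i) => [ez|nez].
- have := Q a b _ ta tb (inE'3 G i).
  apply: (@conn_map h) => u v _ _; rewrite in_rem => /andP[hw c].
  case/memE': hw c => [wR|[-> ->]|[-> ->]|[-> ->]] c.
  + have [-> ->] := hR _ wR; apply: conn1 => //.
    rewrite in_rem (Rin hi wR) ez (countER _ hi) /=.
    case: eqP => [e|//] /=; rewrite add1n ltnS -cnt_pos; exact: wR.
  + by rewrite h1 hx; apply: cnil.
  + by apply: cnil.
  + by move: c; rewrite eqxx /= cnt_new3.
- have zR : z \in R G i by move: hz; rewrite (memER _ hi) => /orP[/eqP//|].
  have := Q a b _ ta tb (inE'R zR).
  apply: (@conn_map h) => u v _ _; rewrite in_rem => /andP[hw c].
  case/memE': hw c => [wR|[-> ->]|[-> ->]|[-> ->]] c.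
  + have [-> ->] := hR _ wR; apply: conn1 => //.
    rewrite in_rem (Rin hi wR) /=; case/orP: c => [->//|c]; apply/orP; right.
    by rewrite (countER _ hi) -(cntE'R wf hi wR) (leq_trans c) ?leq_addl.
  + by rewrite h1 hx; apply: cnil.
  + by apply: cnil.
  + rewrite hx h2; apply: conn1 => //; rewrite -surjective_pairing.
    by apply: rem_mem; [apply/eqP => e; apply: nez; rewrite e | exact: edin hi].
Qed.

Lemma size_exp G i : i < size (gedges G) ->
  size (gedges (expand G i)) = (size (gedges G)).+2.
Proof.
move=> hi; rewrite /expand /= !size_cat size_take hi size_drop /=; lia.
Qed.

Lemma exp_wf G H : expansion G H -> wf_graph G -> wf_graph H.
Proof. elim=> // G' i H' hi _ IH wf; apply: IH; exact: wf_exp. Qed.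

Lemma exp_size G H : expansion G H ->
  gnv G <= gnv H /\ size (gedges H) + 2 * gnv G = size (gedges G) + 2 * gnv H.
Proof.
elim=> // G' i H' hi _ [IH1 IH2]; move: IH1 IH2; rewrite size_exp //= => IH1 IH2.
split; lia.
Qed.

Lemma exp_Qfwd G H : expansion G H -> wf_graph G -> Qg (gedges G) -> Qg (gedges H).
Proof.
elim=> // G' i H' hi _ IH wf Q; apply: IH; [exact: wf_exp | exact: Q_fwd].
Qed.

Lemma exp_Qbwd G H : expansion G H -> wf_graph G -> Qg (gedges H) -> Qg (gedges G).
Proof.
elim=> // G' i H' hi _ IH wf Q; apply: (Q_bwd wf hi); apply: IH => //; exact: wf_exp.
Qed.

Lemma exp_Pfwd G H : expansion G H -> wf_graph G ->
  forall v, v < gnv G -> Pv (gedges G) v -> Pv (gedges H) v.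
Proof.
elim=> // G' i H' hi _ IH wf v hv P; apply: IH; first exact: wf_exp.
  by rewrite /expand /= ltnW.
by apply: P_old_fwd => //; rewrite neq_ltn hv.
Qed.

Lemma G_side G H : expansion G H -> wf_graph G -> Qg (gedges H) ->
  forall z, z < gnv H -> Pv (gedges H) z -> z < gnv G /\ Pv (gedges G) z.
Proof.
elim=> // G' i H' hi eH IH wf Q z hz P.
have wf' := wf_exp wf hi.
have [hz' P'] := IH wf' Q z hz P.
have QG := exp_Qbwd (expansion_step hi eH) wf Q.
case: (z =P gnv G') => [ez|nz].
  by exfalso; apply: (P_new wf hi QG); rewrite -ez.
move: hz'; rewrite /expand /= ltnS leq_eqVlt => /orP[/eqP//|hlt].
split => //; apply: (P_old_bwd wf hi) => //; exact/eqP.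
Qed.

Lemma iso_transfer E1 E2 : wf_graph E1 -> wf_graph E2 -> graph_iso E1 E2 ->
  exists f : nat -> nat, {in [pred v | v < gnv E1] &, injective f} /\
    (forall v, v < gnv E1 -> f v < gnv E2) /\
    (Qg (gedges E1) -> Qg (gedges E2)) /\
    (forall v, v < gnv E1 -> Pv (gedges E1) v -> Pv (gedges E2) (f v)).
Proof.
move=> wf1 wf2 [eN [f [finj [frg fperm]]]].
exists f; split => //; split => //.
have eN' : gnv E2 = gnv E1 by [].
rewrite eN' in frg wf2 *.
set N := gnv E1 in finj frg eN' *.
pose fe (z : nat * nat) := (f z.1, f z.2).
have surj : forall y, y < N -> has (fun v => f v == y) (iota 0 N).
  move=> y hy; have us : uniq (map f (iota 0 N)).
    by rewrite map_inj_in_uniq ?iota_uniq // => p q; rewrite !mem_iota /= => hp hq; apply: finj.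
  have sub : {subset map f (iota 0 N) <= iota 0 N}.
    by move=> w /mapP[p]; rewrite !mem_iota /= => hp ->; apply: frg.
  have [_ eqs] := uniq_min_size us sub (ltac:(by rewrite size_map)).
  have : y \in map f (iota 0 N) by rewrite eqs mem_iota.
  by case/mapP => p hp ->; apply/hasP; exists p.
pose g y := nth 0 (iota 0 N) (find (fun v => f v == y) (iota 0 N)).
have fg : forall y, y < N -> g y < N /\ f (g y) = y.
  move=> y hy; have hs := surj y hy; split.
    have : g y \in iota 0 N by rewrite /g mem_nth // -has_find.
    by rewrite mem_iota.
  exact/eqP/(nth_find 0 hs).
have gf : forall v, v < N -> g (f v) = v.
  move=> v hv; have [h1 h2] := fg _ (frg _ hv); exact: finj.
have wfE1 : forall z, z \in gedges E1 -> (z.1 < N) && (z.2 < N).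
  by move=> z; apply: wfE.
have memE2 : forall z, z \in gedges E2 -> exists2 z0, z0 \in gedges E1 & z = fe z0.
  by move=> z; rewrite -(perm_mem fperm) => /mapP.
have memfe : forall z0, z0 \in gedges E1 -> fe z0 \in gedges E2.
  by move=> z0 h; rewrite -(perm_mem fperm) map_f.
have cntE2 : forall (p : pred (nat * nat)), count p (gedges E2) = count (preim fe p) (gedges E1).
  by move=> p; rewrite -(permP fperm) count_map.
have outd : forall v, v < N -> outdeg (gedges E2) (f v) = outdeg (gedges E1) v.
  move=> v hv; rewrite /outdeg cntE2; apply: eq_in_count => z /wfE1 /andP[h1 _] /=.
  by rewrite (inj_in_eq finj).
have ind : forall v, v < N -> indeg (gedges E2) (f v) = indeg (gedges E1) v.
  move=> v hv; rewrite /indeg cntE2; apply: eq_in_count => z /wfE1 /andP[_ h2] /=.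
  by rewrite (inj_in_eq finj).
have t12e : forall v, v < N -> t12 (gedges E2) (f v) = t12 (gedges E1) v.
  by move=> v hv; rewrite /t12 outd ?ind.
have t22e : forall v, v < N -> t22 (gedges E2) (f v) = t22 (gedges E1) v.
  by move=> v hv; rewrite /t22 outd ?ind.
split.
- move=> Q a b z ta tb hz.
  have ha := t12_lt wf2 ta; have hb := t12_lt wf2 tb; rewrite eN' in ha hb.
  have [ga fga] := fg _ ha; have [gb fgb] := fg _ hb.
  rewrite -fga -fgb; rewrite -fga t12e // in ta; rewrite -fgb t12e // in tb.
  have [z0 hz0 ->] := memE2 z hz.
  have := Q _ _ _ ta tb hz0; apply: (@conn_map f) => u w _ _.
  rewrite in_rem => /andP[huw c]; apply: conn1 => //.
  rewrite in_rem (memfe _ huw) /=; case/orP: c => c; apply/orP.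
    left; apply: contra c => /eqP e; apply/eqP.
    have /andP[p1 p2] := wfE1 _ hz0; have /andP[q1 q2] := wfE1 _ huw.
    case: e => e1 e2; rewrite [z0]surjective_pairing; congr pair; exact: finj.
  right; apply: leq_trans c _; rewrite (cntE2 (pred1 (f u, f w))).
  apply: sub_count => y /= /eqP ->; by rewrite eqxx.
- move=> v hv [nt|[a [b [ta [tb nc]]]]]; first by left; rewrite t22e.
  have ha := t12_lt wf1 ta; have hb := t12_lt wf1 tb.
  right; exists (f a), (f b); rewrite !t12e //; do 2!split => //.
  move=> c; apply: nc; rewrite -(gf _ ha) -(gf _ hb).
  apply: (@conn_map g _ _ _ _ _ _ _ c) => u w ou ow /memE2 [z0 hz0 e].
  case: e => e1 e2; subst u w; have /andP[p1 p2] := wfE1 _ hz0; rewrite !gf //.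
  apply: conn1; rewrite -?surjective_pairing //.
  + by apply: contra ou => /eqP ->.
  + by apply: contra ow => /eqP ->.
Qed.

Definition F n := flatten [seq [:: (i, i.+1); (i.+1, i)] | i <- iota 0 n].
Definition T n := [:: (0, n.+1); (n.+1, n.+1); (n, n.+2); (n.+2, n.+2)].

Lemma OE n : gedges (O_graph n) = F n ++ T n.
Proof. by []. Qed.

Lemma FS n : F n.+1 = F n ++ [:: (n, n.+1); (n.+1, n)].
Proof. by by rewrite /F -addn1 iotaD map_cat flatten_cat /= add0n addn1. Qed.

Lemma memF n u w : (u, w) \in F n -> (w = u.+1 /\ u < n) \/ (u = w.+1 /\ w < n).
Proof.
elim: n => [|n IH] //; rewrite FS mem_cat => /orP[/IH|]; first by lia.
by rewrite !inE => /orP[] /eqP [-> ->]; lia.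
Qed.

Lemma inF1 n k : k < n -> (k, k.+1) \in F n.
Proof.
elim: n => [|n IH] //; rewrite ltnS leq_eqVlt FS mem_cat => /orP[/eqP ->|/IH ->] //.
by rewrite !inE eqxx orbT.
Qed.
Lemma inF2 n k : k < n -> (k.+1, k) \in F n.
Proof.
elim: n => [|n IH] //; rewrite ltnS leq_eqVlt FS mem_cat => /orP[/eqP ->|/IH ->] //.
by rewrite !inE eqxx !orbT.
Qed.

Lemma cntF1 n v : count (fun z : nat*nat => z.1 == v) (F n) = (v < n) + ((0 < v) && (v <= n)).
Proof. elim: n => [|n IH]; first by rewrite /F /=; lia. rewrite FS count_cat IH /=. lia. Qed.
Lemma cntF2 n v : count (fun z : nat*nat => z.2 == v) (F n) = (v < n) + ((0 < v) && (v <= n)).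
Proof. elim: n => [|n IH]; first by rewrite /F /=; lia. rewrite FS count_cat IH /=. lia. Qed.

Lemma O_out n v : outdeg (gedges (O_graph n)) v =
  (v < n) + ((0 < v) && (v <= n)) + (0 == v) + (n.+1 == v) + (n == v) + (n.+2 == v).
Proof. rewrite /outdeg OE count_cat cntF1 /=; lia. Qed.
Lemma O_in n v : indeg (gedges (O_graph n)) v =
  (v < n) + ((0 < v) && (v <= n)) + (n.+1 == v) + (n.+1 == v) + (n.+2 == v) + (n.+2 == v).
Proof. rewrite /indeg OE count_cat cntF2 /=; lia. Qed.

Lemma O_t12 n v : t12 (gedges (O_graph n)) v -> v = 0 \/ v = n.
Proof. rewrite /t12 O_out O_in => /andP[/eqP h1 /eqP h2]; lia. Qed.

Lemma O_cases n v : ~~ t22 (gedges (O_graph n)) v \/ (0 < v < n).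
Proof.
rewrite /t22 O_out O_in; case: (boolP (0 < v < n)) => h; [by right | left].
apply/negP => /andP[/eqP h1 /eqP h2]; move: h; lia.
Qed.

Lemma O_t12_0 n : 0 < n -> t12 (gedges (O_graph n)) 0.
Proof. by move=> hn; rewrite /t12 O_out O_in; apply/andP; split; apply/eqP; lia. Qed.
Lemma O_t12_n n : 0 < n -> t12 (gedges (O_graph n)) n.
Proof. by move=> hn; rewrite /t12 O_out O_in; apply/andP; split; apply/eqP; lia. Qed.

Lemma O_wf n : wf_graph (O_graph n).
Proof.
apply/allP => -[u w]; rewrite OE mem_cat => /orP[/memF|]; rewrite /=; first lia.
by rewrite !inE => /or4P[] /eqP [-> ->]; apply/andP; split; lia.
Qed.

Lemma edgeO n u w : (u, w) \in gedges (O_graph n) ->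
  (w = u.+1 /\ u < n) \/ (u = w.+1 /\ w < n) \/ (u = 0 /\ w = n.+1) \/
      (u = n.+1 /\ w = n.+1) \/ (u = n /\ w = n.+2) \/ (u = n.+2 /\ w = n.+2).
Proof.
rewrite OE mem_cat => /orP[/memF [h|h]|]; [by left | by right; left|].
by rewrite !inE => /or4P[] /eqP [-> ->]; do 2!right; lia.
Qed.

Lemma O_sep n k : 0 < k < n -> ~ conn (gedges (O_graph n)) (fun z => z != k) 0 n.
Proof.
move=> hk c.
suff : forall a b, conn (gedges (O_graph n)) (fun z => z != k) a b ->
    (a < k) || (a == n.+1) -> (b < k) || (b == n.+1).
  by move/(_ _ _ c); case/andP: hk => h1 h2; rewrite h1 /=; lia.
move=> a b; elim=> // u v w ou ov huv _ IH hu; apply: IH.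
move: ou ov hu; case/orP: huv => /edgeO; lia.
Qed.

Lemma O_path n z m : m <= n -> conn (rem z (gedges (O_graph n))) xpredT 0 m.
Proof.
elim: m => [|m IH] hm; first exact: cnil.
apply: (conn_trans (IH (ltnW hm))).
have e1 : (m, m.+1) \in gedges (O_graph n) by rewrite OE mem_cat inF1.
have e2 : (m.+1, m) \in gedges (O_graph n) by rewrite OE mem_cat inF2.
case: (boolP (z == (m, m.+1))) => hz.
  apply: conn_sym; apply: conn1 => //; apply: rem_mem => //.
  by rewrite (eqP hz); apply/eqP; case; lia.
by apply: conn1 => //; apply: rem_mem => //; rewrite eq_sym.
Qed.

Lemma O_Q n : Qg (gedges (O_graph n)).
Proof.
move=> a b z /O_t12 ha /O_t12 hb _.
have c := O_path z (leqnn n).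
case: ha => ->; case: hb => -> //; try exact: cnil; exact: conn_sym.
Qed.

Lemma O_P n v : v < n.+3 -> Pv (gedges (O_graph n)) v.
Proof.
move=> hv; case: (O_cases n v) => [h|h]; first by left.
right; exists 0, n; have hn : 0 < n by lia.
by rewrite O_t12_0 ?O_t12_n //; do 2!split => //; apply: O_sep.
Qed.

Lemma sizeF n : size (F n) = 2 * n.
Proof. elim: n => [|n IH]; first by []. rewrite FS size_cat IH /=; lia. Qed.

Theorem mainTheorem7 (n : nat) (G : graph) :
  wf_graph G -> rearrangement_exists (O_graph n) G ->
  (2 * n + 4 <= size (gedges G))%N.
Proof.
move=> wfG [E1 [E2 [e1 [e2 iso]]]].
have wfO := O_wf n.
have wf1 := exp_wf e1 wfO; have wf2 := exp_wf e2 wfG.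
have Q1 := exp_Qfwd e1 wfO (@O_Q n).
have [s1a s1b] := exp_size e1; have [s2a s2b] := exp_size e2.
have [eN [f' [_ [_ hp]]]] := iso.
have eS : size (gedges E2) = size (gedges E1) by rewrite -(perm_size hp) size_map.
have [f [finj [frg [fQ fP]]]] := iso_transfer wf1 wf2 iso.
have Q2 := fQ Q1.
have gO : gnv (O_graph n) = n.+3 by [].
have hf : forall v, v < n.+3 -> f v < gnv G.
  move=> v hv; have hv1 : v < gnv E1 by rewrite gO in s1a; apply: leq_trans s1a.
  have P1 := exp_Pfwd e1 wfO hv (O_P hv).
  by have [] := G_side e2 wfG Q2 (frg v hv1) (fP v hv1 P1).
have hN : n.+3 <= gnv G.
  have us : uniq (map f (iota 0 n.+3)).
    rewrite map_inj_in_uniq ?iota_uniq // => p q; rewrite !mem_iota /= => hp1 hq1.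
    by apply: finj; rewrite inE /= (leq_trans _ s1a) // gO.
  have := uniq_leq_size us (s2 := iota 0 (gnv G)); rewrite size_map !size_iota; apply.
  by move=> w /mapP[p]; rewrite !mem_iota /= => hp1 ->; apply: hf.
have sO : size (gedges (O_graph n)) = 2 * n + 4 by rewrite OE size_cat sizeF.
rewrite sO gO in s1b; rewrite eS -eN in s2b.
lia.
Qed.
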